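(* Under the standing assumptions and definitions in the context, if $\mathbf{x}^r\in\Gamma$, then $\mathbf{x}^r\in\mathcal{F}(\mathbf{x}^r)$ and the interior of $\mathcal{F}(\mathbf{x}^r)$ is nonempty.
   Context: Problem: minimize $J(\mathbf{x})$ over $\mathbf{x}\in\Gamma\subset\mathbb{R}^n$, where (i) $J:\mathbb{R}^n\to\mathbb{R}^+$ is smooth and strictly convex; (ii) $\Gamma$ is connected and closed with piecewise smooth, non-self-intersecting boundary, and every point of $\Gamma$ lies in some $n$-dimensional convex polytope contained in $\Gamma$. Semi-convex decomposition: $\Gamma=\bigcap_{i=1}^N\Gamma_i$, $\Gamma_i=\{\mathbf{x}:\phi_i(\mathbf{x})\ge 0\}$, $\partial\Gamma_i=\{\mathbf{x}:\phi_i(\mathbf{x})=0\}$, where each $\phi_i:\mathbb{R}^n\to\mathbb{R}$ is continuous, piecewise smooth and semi-convex: there is a positive semidefinite $H_i^*$ such that $\mathbf{x}\mapsto\phi_i(\mathbf{x})+\frac12(\mathbf{x}-\mathbf{x}_0)^TH_i^*(\mathbf{x}-\mathbf{x}_0)$ is convex for every $\mathbf{x}_0$. One-sided directional derivative: $\partial_v\phi_i(\mathbf{x})=\lim_{a\to0^+}(\phi_i(\mathbf{x}+av)-\phi_i(\mathbf{x}))/a$. Sub-differential: $D\phi_i(\mathbf{x})=\{d\in\mathbb{R}^n: d\cdot v\le\partial_v\phi_i(\mathbf{x})\ \forall v\in\mathbb{R}^n\}$. It is assumed that: (1) $D\phi_i(\mathbf{x})\neq\{0\}$ for all $\mathbf{x}$;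 (2) $0\notin D\phi_i(\mathbf{x})$ if $\mathbf{x}\in\partial\Gamma_i$; (3) for any $\mathbf{x}$ with $I:=\{i:\phi_i(\mathbf{x})=0\}\ne\emptyset$ there is $v$ with $\partial_v\phi_i(\mathbf{x})<0$ for all $i\in I$. Optimal sub-gradients at a reference $\mathbf{x}^r$: a unit vector $v$ is a feasible search direction if for every $i$: $\phi_i(\mathbf{x}^r)>0$; or $\phi_i(\mathbf{x}^r)=0$ and some $d\in D\phi_i(\mathbf{x}^r)$ has $v\cdot d\ge0$; or $\phi_i(\mathbf{x}^r)<0$ and some $d\in D\phi_i(\mathbf{x}^r)$ has $v\cdot d>0$. Let $C(\mathbf{x}^r)$ be the set of these, and $v^*=\arg\min_{v\in C(\mathbf{x}^r)}\nabla J(\mathbf{x}^r)\cdot v$ (ties broken lexicographically). Let $DF_i=D\phi_i(\mathbf{x}^r)$ if $\phi_i(\mathbf{x}^r)>0$, $DF_i=\{d\in D\phi_i(\mathbf{x}^r):d\cdot v^*\ge0\}$ if $\phi_i(\mathbf{x}^r)=0$, $DF_i=\{d\in D\phi_i(\mathbf{x}^r):d\cdot v^*>0\}$ if $\phi_i(\mathbf{x}^r)<0$, and $\hat\nabla\phi_i(\mathbf{x}^r)=\arg\min_{d\in DF_i}\nabla J(\mathbf{x}^r)\cdot d/\|d\|$ (with $d/\|d\|:=0$ if $d=0$). Convex feasible set: $\mathcal{F}_i(\mathbf{x}^r)=\Gamma_i$ if $\phi_i$ is concave; $\mathcal{F}_i(\mathbf{x}^r)=\{\mathbf{x}:\phi_i(\mathbf{x}^r)+\hat\nabla\phi_i(\mathbf{x}^r)(\mathbf{x}-\mathbf{x}^r)\ge0\}$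 if $\phi_i$ is convex; $\mathcal{F}_i(\mathbf{x}^r)=\{\mathbf{x}:\phi_i(\mathbf{x}^r)+\hat\nabla\phi_i(\mathbf{x}^r)(\mathbf{x}-\mathbf{x}^r)\ge\frac12(\mathbf{x}-\mathbf{x}^r)^TH_i^*(\mathbf{x}-\mathbf{x}^r)\}$ otherwise; $\mathcal{F}(\mathbf{x}^r)=\bigcap_{i=1}^N\mathcal{F}_i(\mathbf{x}^r)$. *)

(* Defs.v *)
(* R^n is modelled as 'rV[R]_n. *)
From HB Require Import structures.
From mathcomp Require Import all_boot all_order all_algebra.
From mathcomp Require Import all_classical all_reals all_analysis.
Set Implicit Arguments. Unset Strict Implicit. Unset Printing Implicit Defensive.
Import Order.TTheory GRing.Theory Num.Theory.
Import numFieldNormedType.Exports.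
Local Open Scope classical_set_scope.
Local Open Scope ring_scope.

Section Defs.
Variables (R : realType) (n : nat).
Notation V := 'rV[R]_n.

Definition dot (u v : V) : R := \sum_(k < n) u 0 k * v 0 k.
Definition enorm (u : V) : R := Num.sqrt (dot u u).

Definition quad (H : 'M[R]_n) (w : V) : R := (w *m H *m w^T) 0 0.

Definition psd (H : 'M[R]_n) : Prop := H^T = H /\ forall w : V, 0 <= quad H w.

Definition convex_fun (f : V -> R) : Prop :=
  forall (x y : V) (t : R), 0 <= t <= 1 ->
    f (t *: x + (1 - t) *: y) <= t * f x + (1 - t) * f y.
Definition concave_fun (f : V -> R) : Prop := convex_fun (fun x => - f x).
Definition strictly_convex (f : V -> R) : Prop :=
  forall (x y : V) (t : R), x != y -> 0 < t < 1 ->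
    f (t *: x + (1 - t) *: y) < t * f x + (1 - t) * f y.

Definition semiconvex_with (phi : V -> R) (H : 'M[R]_n) : Prop :=
  psd H /\ forall x0 : V, convex_fun (fun x => phi x + 2^-1 * quad H (x - x0)).

Fixpoint iter_dder (vs : seq V) (f : V -> R) : V -> R :=
  match vs with
  | [::] => f
  | v :: vs' => fun x => derive (iter_dder vs' f) x v
  end.
Definition smooth (f : V -> R) : Prop :=
  forall (vs : seq V) (x : V), differentiable (iter_dder vs f) x.

Definition grad (f : V -> R) (x : V) : V :=
  \row_(k < n) derive f x (delta_mx 0 k).

Definition ddir (f : V -> R) (x v : V) : R :=
  lim ((fun a : R => (f (x + a *: v) - f x) / a) @ 0^'+).

Definition subdiff (f : V -> R) (x : V) : set V :=
  [set d | forall v : V, dot d v <= ddir f x v].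

Definition lex_le (u v : V) : Prop :=
  u = v \/ exists k : 'I_n,
    (forall j : 'I_n, (j < k)%N -> u 0 j = v 0 j) /\ u 0 k < v 0 k.

Variable N : nat.
Variable phi : 'I_N -> V -> R.

Definition Gamma_i (i : 'I_N) : set V := [set x | 0 <= phi i x].
Definition Gamma : set V := [set x | forall i, 0 <= phi i x].

Definition topo_boundary (A : set V) : set V := closure A `\` A°.

Definition conv_hull (m : nat) (p : 'I_m -> V) : set V :=
  [set y | exists w : 'I_m -> R, (forall k, 0 <= w k) /\
     \sum_(k < m) w k = 1 /\ y = \sum_(k < m) w k *: p k].

Definition polytope_covered (G : set V) : Prop :=
  forall x, G x -> exists (m : nat) (p : 'I_m -> V),
    conv_hull p x /\ conv_hull p `<=` G /\ (conv_hull p)° !=set0.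

Definition assumption1 : Prop :=
  forall i x, subdiff (phi i) x <> [set 0].
Definition assumption2 : Prop :=
  forall i x, phi i x = 0 -> ~ subdiff (phi i) x 0.
Definition assumption3 : Prop :=
  forall x, (exists i, phi i x = 0) ->
    exists v : V, forall i, phi i x = 0 -> ddir (phi i) x v < 0.

Definition feas_dirs (xr : V) : set V :=
  [set v | enorm v = 1 /\ forall i,
     0 < phi i xr
     \/ (phi i xr = 0 /\ exists2 d, subdiff (phi i) xr d & 0 <= dot v d)
     \/ (phi i xr < 0 /\ exists2 d, subdiff (phi i) xr d & 0 < dot v d)].

Definition is_vstar (g xr vstar : V) : Prop :=
  feas_dirs xr vstar /\
  forall v, feas_dirs xr v ->
    dot g vstar <= dot g v /\ (dot g vstar = dot g v -> lex_le vstar v).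

Definition DF (xr vstar : V) (i : 'I_N) : set V :=
  [set d | subdiff (phi i) xr d /\
     (0 < phi i xr
      \/ (phi i xr = 0 /\ 0 <= dot d vstar)
      \/ (phi i xr < 0 /\ 0 < dot d vstar))].

(* hat-grad phi_i = argmin_{d in DF_i} g.d/|d|  (with d/|d| := 0 for d = 0;
   note x / 0 = 0 in MathComp) *)
Definition is_dhat (g xr vstar : V) (i : 'I_N) (dh : V) : Prop :=
  DF xr vstar i dh /\
  forall d, DF xr vstar i d -> dot g dh / enorm dh <= dot g d / enorm d.

Variable H : 'I_N -> 'M[R]_n.

(* F_i(x^r), with the case order of the paper: concave, else convex, else *)
Definition Fi (xr : V) (dhat : 'I_N -> V) (i : 'I_N) : set V :=
  [set x |
     (concave_fun (phi i) -> 0 <= phi i x) /\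
     (~ concave_fun (phi i) -> convex_fun (phi i) ->
        0 <= phi i xr + dot (dhat i) (x - xr)) /\
     (~ concave_fun (phi i) -> ~ convex_fun (phi i) ->
        2^-1 * quad (H i) (x - xr) <= phi i xr + dot (dhat i) (x - xr))].

Definition Ffeas (xr : V) (dhat : 'I_N -> V) : set V :=
  [set x | forall i, Fi xr dhat i x].

End Defs.

(* Main.v *)
Require Import Defs.
From HB Require Import structures.
From mathcomp Require Import all_boot all_order all_algebra.
From mathcomp Require Import all_classical all_reals all_analysis.
From mathcomp Require Import ring lra.
Import Order.TTheory GRing.Theory Num.Theory.
Import numFieldNormedType.Exports.
Local Open Scope classical_set_scope.
Local Open Scope ring_scope.

Section Aux.
Variables (R : realType) (n : nat).
Notation V := 'rV[R]_n.

Lemma dotE (d x : V) : dot d x = \sum_(k < n) d 0 k * x 0 k.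
Proof. by []. Qed.

Lemma dotD (d a b : V) : dot d (a + b) = dot d a + dot d b.
Proof. rewrite /dot -big_split /=; apply: eq_bigr => k _; rewrite mxE; ring. Qed.

Lemma dotZ (d a : V) (s : R) : dot d (s *: a) = s * dot d a.
Proof. rewrite /dot mulr_sumr; apply: eq_bigr => k _; rewrite mxE; ring. Qed.

Lemma dotN (d a : V) : dot d (- a) = - dot d a.
Proof. by rewrite -scaleN1r dotZ mulN1r. Qed.

Lemma quadE (H : 'M[R]_n) (w : V) :
  quad H w = \sum_(j < n) (\sum_(k < n) w 0 k * H k j) * w 0 j.
Proof. rewrite /quad mxE; apply: eq_bigr => j _; by rewrite !mxE. Qed.

Lemma quadZ (H : 'M[R]_n) (w : V) s : quad H (s *: w) = s ^+ 2 * quad H w.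
Proof.
rewrite !quadE mulr_sumr; apply: eq_bigr => j _.
rewrite !mxE !big_distrl /= mulr_sumr; apply: eq_bigr => k _; rewrite !mxE; ring.
Qed.

Lemma quad0 (H : 'M[R]_n) : quad H 0 = 0.
Proof. by rewrite -(scale0r (0 : V)) quadZ expr2 !mul0r. Qed.

Lemma dot0 (d : V) : dot d 0 = 0.
Proof. by rewrite -(scale0r (0 : V)) dotZ mul0r. Qed.

Lemma sum_cont (T : topologicalType) (F : 'I_n -> T -> R) :
  (forall k, continuous (F k)) -> continuous (fun x => \sum_(k < n) F k x).
Proof.
move=> Fc; apply: (@continuous_big R^o 'I_n +%R 0 xpredT _) => //.
exact: add_continuous.
Qed.

Lemma dot_cont (d c : V) : continuous (fun x : V => dot d (x - c)).
Proof.
apply: sum_cont => k x.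
apply: continuousM; first exact: cst_continuous.
rewrite /=.
have -> : (fun x : V => (x - c) 0 k) = (fun x : V => x 0 k - c 0 k).
  by apply/funext => y; rewrite !mxE.
apply: continuousB; first exact: coord_continuous.
exact: cst_continuous.
Qed.

Lemma quad_cont (H : 'M[R]_n) (c : V) : continuous (fun x : V => quad H (x - c)).
Proof.
have -> : (fun x : V => quad H (x - c)) =
   (fun x => \sum_(j < n) (\sum_(k < n) (x 0 k - c 0 k) * H k j) * (x 0 j - c 0 j)).
  apply/funext => x; rewrite quadE; apply: eq_bigr => j _; rewrite !mxE; congr (_ * _).
  by apply: eq_bigr => k _; rewrite !mxE.
have cc : forall k, continuous (fun x : V => x 0 k - c 0 k).
  move=> k x; apply: continuousB; [exact: coord_continuous| exact: cst_continuous].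
apply: sum_cont => j x.
apply: (@continuousM _ _ (fun x : V => \sum_(k < n) (x 0 k - c 0 k) * H k j) (fun x : V => x 0 j - c 0 j)); last exact: cc.
apply: (@sum_cont V (fun k x => (x 0 k - c 0 k) * H k j)) => k y /=.
apply: (@continuousM _ _ (fun x : V => x 0 k - c 0 k) (fun=> H k j)); [exact: cc| exact: cst_continuous].
Qed.


Lemma concave_nonneg (f : V -> R) (a b : V) (t : R) :
  concave_fun f -> 0 <= f a -> 0 <= f b -> 0 <= t <= 1 ->
  0 <= f (t *: a + (1 - t) *: b).
Proof.
move=> cf fa fb /andP[t0 t1].
have := cf a b t; rewrite t0 t1 => /(_ isT) h.
have : 0 <= t * f a + (1 - t) * f b.
  by apply: addr_ge0; apply: mulr_ge0 => //; rewrite subr_ge0.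
lra.
Qed.

Lemma concave_ddir (f : V -> R) (x u : V) :
  concave_fun f -> 0 < ddir f x u -> exists2 t, 0 < t & f x <= f (x + t *: u).
Proof.
move=> cf dpos.
have [//|nex] := pselect (exists2 t, 0 < t & f x <= f (x + t *: u)).
exfalso.
have hlt : forall t, 0 < t -> f (x + t *: u) < f x.
  move=> t t0; rewrite ltNge; apply/negP => h; apply: nex; by exists t.
pose q := fun a : R => (f (x + a *: u) - f x) / a.
have mono : {in Interval (BRight 0) (BInfty _ false) &, nonincreasing_fun q}.
  move=> a b; rewrite !in_itv /= !andbT => a0 b0 ab.
  have := cf (x + b *: u) x (a / b).
  have hab : 0 <= a / b <= 1.
    apply/andP; split; first exact: divr_ge0 (ltW a0) (ltW b0).
    by rewrite ler_pdivrMr // mul1r.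
  move=> /(_ hab).
  have -> : (a / b) *: (x + b *: u) + (1 - a / b) *: x = x + a *: u.
    apply/rowP => k; rewrite !mxE; field; exact: lt0r_neq0 b0.
  move=> h; rewrite /q ler_pdivlMr //.
  have -> : (f (x + b *: u) - f x) / b * a = (a / b) * (f (x + b *: u) - f x).
    by ring.
  set t := a / b in h *; nra.
have ub : has_ubound (q @` [set` Interval (BRight 0) (BInfty _ false)]).
  exists 0 => _ [a /= a0 <-]; move: a0; rewrite in_itv /= andbT => a0.
  by rewrite /q ltW // ltr_pdivrMr // mul0r subr_lt0; exact: hlt.
have cv := @nonincreasing_at_right_cvgr R q 0 (BInfty _ false) isT mono ub.
have : ddir f x u <= 0.
  rewrite /ddir; apply: limr_le; first exact: cvgP cv.
  near=> a.
  have a0 : 0 < a by near: a; exact: nbhs_right_gt.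
  by rewrite ltW // ltr_pdivrMr // mul0r subr_lt0; exact: hlt.
by rewrite leNgt dpos.
Unshelve. all: by end_near.
Qed.


Lemma near_poly_pos (p a b : R) : 0 <= p -> (p = 0 -> 0 < a) ->
  \forall s \near 0^'+, 0 < p + s * (a - s * b).
Proof.
move=> p0 pa.
have [pe|pgt] := eqVneq p 0.
  have a0 := pa pe; rewrite pe.
  have bp : 0 < `|b| + 1 by have := normr_ge0 b; lra.
  near=> s.
  have s0 : 0 < s by near: s; exact: nbhs_right_gt.
  have sa : s < a / (`|b| + 1) by near: s; exact: nbhs_right_lt (divr_gt0 a0 bp).
  move: sa; rewrite ltr_pdivlMr // => sa.
  have hb : b <= `|b| := ler_norm b.
  rewrite add0r; apply: mulr_gt0 => //; nra.
have p1 : 0 < p by rewrite lt0r pgt.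
have bp : 0 < `|a| + `|b| + 1 by have := normr_ge0 b; have := normr_ge0 a; lra.
near=> s.
have s0 : 0 < s by near: s; exact: nbhs_right_gt.
have s1 : s < 1 by near: s; exact: nbhs_right_lt ltr01.
have sa : s < p / (`|a| + `|b| + 1) by near: s; exact: nbhs_right_lt (divr_gt0 p1 bp).
move: sa; rewrite ltr_pdivlMr // => sa.
have ha : - `|a| <= a by rewrite lerNl -normrN; exact: ler_norm.
have hb : b <= `|b| := ler_norm b.
have hb0 : 0 <= `|b| := normr_ge0 b.
have h1 : - (s * `|a|) <= s * a by rewrite -mulrN ler_pM2l.
have h2 : s * b <= `|b| by nra.
have h3 : s * (s * b) <= s * `|b| by rewrite ler_pM2l.
nra.
Unshelve. all: by end_near.
Qed.

End Aux.
Arguments concave_ddir {R n f x u}.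
Arguments concave_nonneg {R n f a b t}.
Arguments near_poly_pos {R}.
Arguments dot_cont {R n}.
Arguments quad_cont {R n}.

Theorem lemma4p2 (R : realType) (n N : nat)
  (J : 'rV[R]_n -> R) (phi : 'I_N -> 'rV[R]_n -> R) (H : 'I_N -> 'M[R]_n)
  (xr vstar : 'rV[R]_n) (dhat : 'I_N -> 'rV[R]_n) :
  (* (i) J : R^n -> R^+ smooth and strictly convex *)
  smooth J -> (forall x, 0 <= J x) -> strictly_convex J ->
  (* (ii) Gamma connected, closed, covered by n-dimensional convex polytopes *)
  closed (Gamma phi) -> connected (Gamma phi) -> polytope_covered (Gamma phi) ->
  (* semi-convex decomposition *)
  (forall i, continuous (phi i)) ->
  (forall i, semiconvex_with (phi i) (H i)) ->
  (forall i, topo_boundary (Gamma_i phi i) = [set x | phi i x = 0]) ->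
  assumption1 phi -> assumption2 phi -> assumption3 phi ->
  (* reference point and optimal sub-gradients *)
  Gamma phi xr ->
  (forall i, ~ concave_fun (phi i) ->
     is_vstar phi (grad J xr) xr vstar /\
     is_dhat phi (grad J xr) xr vstar i (dhat i)) ->
  Ffeas phi H xr dhat xr /\ (Ffeas phi H xr dhat)° !=set0.
Proof.
move=> _ _ _ _ _ Hpoly Hcont _ _ _ _ A3 Gxr Hsel.
split.
  move=> i; rewrite /Fi /=; split; first by move=> _; exact: Gxr i.
  split.
  - by move=> _ _; rewrite subrr dot0 addr0; exact: Gxr i.
  - by move=> _ _; rewrite subrr dot0 quad0 mulr0 addr0; exact: Gxr i.
have [m [p [_ [sub [z zint]]]]] := Hpoly xr Gxr.
have [r r0 rsub] : exists2 r : R, 0 < r & ball z r `<=` Gamma phi.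
  move: zint; rewrite /interior => /nbhs_ballP [r r0 hr].
  by exists r => // y /hr; exact: sub.
have [allc|] := pselect (forall i, concave_fun (phi i)).
  exists z; rewrite /interior; apply/nbhs_ballP; exists r => // y /rsub Gy i.
  rewrite /Fi /=; split; first by move=> _; exact: Gy i.
  by split => /(_ (allc i)).
move=> /existsNP [i0 nc0].
have [vs _] := Hsel i0 nc0.
have subd : forall i, phi i xr = 0 -> exists d, subdiff (phi i) xr d.
  move=> i pi0; case: (vs.1.2 i) => [pos|[[_ [d hd _]]|[neg _]]].
  - by rewrite pi0 ltxx in pos.
  - by exists d.
  - by rewrite pi0 ltxx in neg.
have [v hv] : exists v : 'rV[R]_n, forall i, phi i xr = 0 -> ddir (phi i) xr v < 0.
  have [ex|nex] := pselect (exists i, phi i xr = 0); first exact: A3 xr ex.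
  by exists 0 => i pi0; exfalso; apply: nex; exists i.
pose u := - v.
have dpos : forall i d, phi i xr = 0 -> subdiff (phi i) xr d -> 0 < dot d u.
  move=> i d pi0 sd; have := sd v; have := hv i pi0; rewrite /u dotN; lra.
have ddpos : forall i, phi i xr = 0 -> 0 < ddir (phi i) xr u.
  move=> i pi0; have [d sd] := subd i pi0; have := dpos i d pi0 sd; have := sd u; lra.

have ht0 : forall i, exists t : R, 0 < t /\ (concave_fun (phi i) -> 0 <= phi i (xr + t *: u)).
  move=> i; have [ci|nci] := pselect (concave_fun (phi i)); last first.
    by exists 1; split => //; rewrite ltr01.
  have [pi0|pipos] : phi i xr = 0 \/ 0 < phi i xr.
    by have := Gxr i; rewrite le_eqVlt => /orP[/eqP <-|]; [left|right].
  - have [t t0 ht] := concave_ddir ci (ddpos i pi0).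
    by exists t; split => // _; rewrite -pi0.
  - have cv : (fun t : R => phi i (xr + t *: u)) @ 0^'+ --> phi i xr.
      apply: cvg_at_right_filter.
      have -> : phi i xr = phi i (xr + 0 *: u) by rewrite scale0r addr0.
      apply: (@continuous_comp _ _ _ (fun t : R => xr + t *: u) (phi i) 0); last exact: Hcont.
      apply: continuousD; first exact: cst_continuous.
      by apply: continuousZr_tmp; exact: cvg_id.
    have hn := cvgr_gt _ cv 0 pipos.
    have : \forall t \near 0^'+, 0 < t /\ 0 < phi i (xr + t *: u).
      by near=> t; split; [near: t; exact: nbhs_right_gt| near: t; exact: hn].
    move=> /filter_ex [t [t0 ht]]; exists t; split => // _; exact: ltW.
have [t0 ht0f] := choice ht0.
have dhsub : forall i, ~ concave_fun (phi i) -> subdiff (phi i) xr (dhat i).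
  by move=> i nci; have [_ [[]]] := Hsel i nci.
have : \forall k \near 0^'+, 0 < k /\ forall i, ~ concave_fun (phi i) -> phi i xr = 0 ->
    0 < dot (dhat i) u + k * (dot (dhat i) (z - xr) - k * 0).
  near=> k; split; first by near: k; exact: nbhs_right_gt.
  near: k; apply: filter_forall => i.
  have [[nci pi0]|nn] := pselect (~ concave_fun (phi i) /\ phi i xr = 0).
    have hp := dpos i _ pi0 (dhsub i nci).
    have := near_poly_pos (dot (dhat i) u) (dot (dhat i) (z - xr)) 0 (ltW hp).
    have hh : dot (dhat i) u = 0 -> 0 < dot (dhat i) (z - xr).
      by move=> pe; move: hp; rewrite pe ltxx.
    move=> /(_ hh).
    by apply: filterS => k hk _ _.
  by near=> k => nci pi0; exfalso; apply: nn.
move=> /filter_ex [kap [kap0 hkap]].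
pose w := u + kap *: (z - xr).
have dw : forall i, ~ concave_fun (phi i) -> phi i xr = 0 -> 0 < dot (dhat i) w.
  move=> i nci pi0; have := hkap i nci pi0; rewrite /w (@dotD _ _ (dhat i) u) dotZ; lra.

have : \forall s \near 0^'+, 0 < s /\ forall i,
   (concave_fun (phi i) -> 0 < 1 + s * (- ((t0 i)^-1 + kap) - s * 0)) /\
   (~ concave_fun (phi i) -> 0 < phi i xr + s * (dot (dhat i) w - s * 0) /\
        0 < phi i xr + s * (dot (dhat i) w - s * (2^-1 * quad (H i) w))).
  near=> s; split; first by near: s; exact: nbhs_right_gt.
  near: s; apply: filter_forall => i.
  have hc : \forall s \near 0^'+, concave_fun (phi i) ->
      0 < 1 + s * (- ((t0 i)^-1 + kap) - s * 0).
    have h10 : (1:R) = 0 -> 0 < - ((t0 i)^-1 + kap).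
      by move=> e; exfalso; move: e; apply/eqP; exact: oner_neq0.
    have := near_poly_pos 1 (- ((t0 i)^-1 + kap)) 0 ler01 h10.
    by apply: filterS => s hs _.
  have hn : \forall s \near 0^'+, ~ concave_fun (phi i) ->
      0 < phi i xr + s * (dot (dhat i) w - s * 0) /\
      0 < phi i xr + s * (dot (dhat i) w - s * (2^-1 * quad (H i) w)).
    have [nci|ci] := pselect (~ concave_fun (phi i)); last first.
      by near=> s => nci; exfalso.
    have pge := Gxr i.
    have hh := dw i nci.
    have h1 := near_poly_pos (phi i xr) (dot (dhat i) w) 0 pge hh.
    have h2 := near_poly_pos (phi i xr) (dot (dhat i) w) (2^-1 * quad (H i) w) pge hh.
    near=> s => _; split; [near: s; exact: h1 | near: s; exact: h2].
  near=> s; split; [near: s; exact: hc | near: s; exact: hn].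
move=> /filter_ex [s [s0 hs]].
pose y := xr + s *: w.
exists y; rewrite /interior.
suff : \forall x \near y, forall i, Fi phi H xr dhat i x by [].
apply: (@filter_forall _ 'I_N (fun i x => Fi phi H xr dhat i x) (nbhs y) _) => i.
have yx : y - xr = s *: w by rewrite /y addrAC subrr add0r.
have [ci|nci] := pselect (concave_fun (phi i)); last first.
  have [hs1 hs2] := (hs i).2 nci.
  have c1 : {for y, continuous (fun x : 'rV[R]_n => phi i xr + dot (dhat i) (x - xr))}.
    apply: continuousD; [exact: cst_continuous | exact: dot_cont].
  have c2 : {for y, continuous (fun x : 'rV[R]_n => phi i xr + dot (dhat i) (x - xr)
                                      - 2^-1 * quad (H i) (x - xr))}.
    apply: continuousB; first exact: c1.
    apply: continuousM; [exact: cst_continuous | exact: quad_cont].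
  have v1 : 0 < phi i xr + dot (dhat i) (y - xr).
    by rewrite yx dotZ; move: hs1; rewrite mulr0 subr0.
  have v2 : 0 < phi i xr + dot (dhat i) (y - xr) - 2^-1 * quad (H i) (y - xr).
    rewrite yx dotZ quadZ.
    suff -> : phi i xr + s * dot (dhat i) w - 2^-1 * (s ^+ 2 * quad (H i) w) =
      phi i xr + s * (dot (dhat i) w - s * (2^-1 * quad (H i) w)) by [].
    by ring.
  have n1 := cvgr_gt _ c1 0 v1.
  have n2 := cvgr_gt _ c2 0 v2.
  near=> x; rewrite /Fi /=; split; first by move/nci.
  split => _ _.
  - apply: ltW; near: x; exact: n1.
  - have : 0 < phi i xr + dot (dhat i) (x - xr) - 2^-1 * quad (H i) (x - xr).
      by near: x; exact: n2.
    lra.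
have hcs := (hs i).1 ci.
have [t0p ht0c] := ht0f i.
have ht0c' := ht0c ci.
pose be := s * kap.
have be0 : 0 < be by apply: mulr_gt0.
have st0 : 0 < s * (t0 i)^-1 by apply: mulr_gt0 => //; rewrite invr_gt0.
have hcs2 : s * (t0 i)^-1 + be < 1.
  by move: hcs; rewrite /be mulr0 subr0 mulrN mulrDr; lra.
have be1 : be < 1 by lra.
apply/nbhs_ballP; exists (be * r); first exact: mulr_gt0.
move=> x; rewrite -ball_normE /ball_ /= => hx.
rewrite /Fi /=; split; last by split => /(_ ci).
move=> _.
pose b := be^-1 *: (x - y).
have Gb : Gamma phi (z + b).
  apply: rsub; rewrite -ball_normE /ball_ /=.
  rewrite opprD addrA subrr add0r normrN /b normrZ ger0_norm ?invr_ge0 ?ltW //.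
  by rewrite distrC mulrC ltr_pdivrMr // mulrC.
pose q := (s / t0 i) / (1 - be).
have q01 : 0 <= q <= 1.
  have h1b : 0 < 1 - be by lra.
  apply/andP; split; first by apply: divr_ge0; [exact: ltW | exact: ltW].
  by rewrite /q ler_pdivrMr // mul1r; lra.
have m1 := concave_nonneg ci ht0c' (Gxr i) q01.
have hbe : 0 <= 1 - be <= 1 by apply/andP; split; lra.
have := concave_nonneg ci m1 (Gb i) hbe.
suff -> : (1 - be) *: (q *: (xr + t0 i *: u) + (1 - q) *: xr) + (1 - (1 - be)) *: (z + b) = x by [].
apply/rowP => k; rewrite /b /y /w /u /q /be !mxE.
field.
apply/and4P; split; try exact: lt0r_neq0.
by apply: lt0r_neq0; rewrite subr_gt0; exact: be1.
Unshelve. all: by end_near.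
Qed.
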